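(* Let $N\ge 1$ and let $\lambda,\mu$ be complex parameters. Consider fields $x,\widetilde{x},\widehat{x},\widehat{\widetilde{x}}\in\mathbb{C}^N$ with indices taken modulo $N$. Suppose that $x,\widetilde{x},\widehat{x}$ satisfy, for all $k$, $$(E)\qquad \frac{\widetilde{x}_k-x_k+\lambda}{\widetilde{x}_k-x_k-\lambda}\cdot\frac{x_k-\widetilde{x}_{k-1}+\lambda}{x_k-\widetilde{x}_{k-1}-\lambda}=\frac{\widehat{x}_k-x_k+\mu}{\widehat{x}_k-x_k-\mu}\cdot\frac{x_k-\widehat{x}_{k-1}+\mu}{x_k-\widehat{x}_{k-1}-\mu}.$$ Consider the superposition formulas $$(S1)\quad \mu(\widehat{\widetilde{x}}_k-\widehat{x}_k)(x_{k+1}-\widetilde{x}_k)-\lambda(\widehat{\widetilde{x}}_k-\widetilde{x}_k)(x_{k+1}-\widehat{x}_k)+\lambda\mu(\lambda-\mu)=0,$$ $$(S2)\quad \mu(\widetilde{x}_{k+1}-x_{k+1})(\widehat{x}_{k+1}-\widehat{\widetilde{x}}_k)-\lambda(\widehat{x}_{k+1}-x_{k+1})(\widetilde{x}_{k+1}-\widehat{\widetilde{x}}_k)+\lambda\mu(\lambda-\mu)=0.$$ Then, by virtue of $(E)$, (S1) and (S2) are equivalent, and if $\widehat{\widetilde{x}}$ is defined by either of them, then for all $k$: $$(E_1)\quad \frac{\widetilde{x}_k-x_k+\lambda}{\widetilde{x}_k-x_k-\lambda}\cdot\frac{x_{k+1}-\widetilde{x}_k+\lambda}{x_{k+1}-\widetilde{x}_k-\lambda}=\frac{\widehat{\widetilde{x}}_k-\widetilde{x}_k+\mu}{\widehat{\widetilde{x}}_k-\widetilde{x}_k-\mu}\cdot\frac{\widetilde{x}_k-\widehat{\widetilde{x}}_{k-1}+\mu}{\widetilde{x}_k-\widehat{\widetilde{x}}_{k-1}-\mu},$$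 $$(E_2)\quad \frac{\widehat{x}_k-x_k+\mu}{\widehat{x}_k-x_k-\mu}\cdot\frac{x_{k+1}-\widehat{x}_k+\mu}{x_{k+1}-\widehat{x}_k-\mu}=\frac{\widehat{\widetilde{x}}_k-\widehat{x}_k+\lambda}{\widehat{\widetilde{x}}_k-\widehat{x}_k-\lambda}\cdot\frac{\widehat{x}_k-\widehat{\widetilde{x}}_{k-1}+\lambda}{\widehat{x}_k-\widehat{\widetilde{x}}_{k-1}-\lambda},$$ $$(E_{12})\quad \frac{\widehat{\widetilde{x}}_k-\widehat{x}_k+\lambda}{\widehat{\widetilde{x}}_k-\widehat{x}_k-\lambda}\cdot\frac{\widehat{x}_{k+1}-\widehat{\widetilde{x}}_k+\lambda}{\widehat{x}_{k+1}-\widehat{\widetilde{x}}_k-\lambda}=\frac{\widehat{\widetilde{x}}_k-\widetilde{x}_k+\mu}{\widehat{\widetilde{x}}_k-\widetilde{x}_k-\mu}\cdot\frac{\widetilde{x}_{k+1}-\widehat{\widetilde{x}}_k+\mu}{\widetilde{x}_{k+1}-\widehat{\widetilde{x}}_k-\mu}.$$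
   Context: These are the corner equations for two Bäcklund transformations $F_\lambda,F_\mu$ of the periodic symmetric rational multiplicative Toda-type system $\ddot x_k=-(\dot x_k^2-1)\big(\frac{1}{x_{k+1}-x_k}-\frac{1}{x_k-x_{k-1}}\big)$, where $F_\lambda:(x,p)\mapsto(\widetilde x,\widetilde p)$ is $e^{2p_k}=\frac{\widetilde x_k-x_k+\lambda}{\widetilde x_k-x_k-\lambda}\cdot\frac{x_k-\widetilde x_{k-1}+\lambda}{x_k-\widetilde x_{k-1}-\lambda}$, $e^{2\widetilde p_k}=\frac{\widetilde x_k-x_k+\lambda}{\widetilde x_k-x_k-\lambda}\cdot\frac{x_{k+1}-\widetilde x_k+\lambda}{x_{k+1}-\widetilde x_k-\lambda}$; hats denote the action of $F_\mu$. *)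

(* Defs.v *)
From HB Require Import structures.
From mathcomp Require Import all_boot all_order all_algebra.
From mathcomp Require Import complex.
From mathcomp Require Import reals.
Set Implicit Arguments. Unset Strict Implicit. Unset Printing Implicit Defensive.
Import Order.TTheory GRing.Theory Num.Theory.
Local Open Scope ring_scope.

Section Toda.
Variable F : fieldType.
Variable N : nat.

(* indices modulo N: k+1 and k-1 on 'I_N *)
Definition nxt (k : 'I_N) : 'I_N := ordS k.
Definition prv (k : 'I_N) : 'I_N := ord_pred k.

Definition phi (d nu : F) : F := (d + nu) / (d - nu).

Definition nondeg (d nu : F) : Prop := d + nu <> 0 /\ d - nu <> 0.

Variables (lam mu : F) (x xt xh xht : 'I_N -> F).

Definition btE (k : 'I_N) : Prop :=
  phi (xt k - x k) lam * phi (x k - xt (prv k)) lam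
  = phi (xh k - x k) mu * phi (x k - xh (prv k)) mu.

Definition btS1 (k : 'I_N) : Prop :=
  mu * (xht k - xh k) * (x (nxt k) - xt k)
  - lam * (xht k - xt k) * (x (nxt k) - xh k) + lam * mu * (lam - mu) = 0.

Definition btS2 (k : 'I_N) : Prop :=
  mu * (xt (nxt k) - x (nxt k)) * (xh (nxt k) - xht k)
  - lam * (xh (nxt k) - x (nxt k)) * (xt (nxt k) - xht k) + lam * mu * (lam - mu) = 0.

Definition btE1 (k : 'I_N) : Prop :=
  phi (xt k - x k) lam * phi (x (nxt k) - xt k) lam
  = phi (xht k - xt k) mu * phi (xt k - xht (prv k)) mu.

Definition btE2 (k : 'I_N) : Prop :=
  phi (xh k - x k) mu * phi (x (nxt k) - xh k) mu
  = phi (xht k - xh k) lam * phi (xh k - xht (prv k)) lam.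

Definition btE12 (k : 'I_N) : Prop :=
  phi (xht k - xh k) lam * phi (xh (nxt k) - xht k) lam
  = phi (xht k - xt k) mu * phi (xt (nxt k) - xht k) mu.

(* genericity: every factor occurring in (E), (E1), (E2), (E12) at index k
   is well defined and nonzero *)
Definition generic (k : 'I_N) : Prop :=
  (nondeg (xt k - x k) lam /\ nondeg (x k - xt (prv k)) lam /\
   nondeg (x (nxt k) - xt k) lam /\ nondeg (xht k - xh k) lam /\
   nondeg (xh k - xht (prv k)) lam /\ nondeg (xh (nxt k) - xht k) lam)
  /\
  (nondeg (xh k - x k) mu /\ nondeg (x k - xh (prv k)) mu /\
   nondeg (x (nxt k) - xh k) mu /\ nondeg (xht k - xt k) mu /\
   nondeg (xt k - xht (prv k)) mu /\ nondeg (xt (nxt k) - xht k) mu).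

(* (S1) resp. (S2) at index k genuinely determine xht_k (nonzero coefficient) *)
Definition S1_solvable (k : 'I_N) : Prop :=
  mu * (x (nxt k) - xt k) - lam * (x (nxt k) - xh k) <> 0.
Definition S2_solvable (k : 'I_N) : Prop :=
  lam * (xh (nxt k) - x (nxt k)) - mu * (xt (nxt k) - x (nxt k)) <> 0.

End Toda.

(* Main.v *)
Require Import Defs.
From HB Require Import structures.
From mathcomp Require Import all_boot all_order all_algebra.
From mathcomp Require Import complex.
From mathcomp Require Import reals.
From mathcomp Require Import ring.
Import Order.TTheory GRing.Theory Num.Theory.
Set Implicit Arguments. Unset Strict Implicit.
Local Open Scope ring_scope.

Section Loc.
Variable F : fieldType.
Implicit Types (l m a b p q X P Q A B C D : F).

Lemma solve_lin (X c e s : F) : c != 0 -> X * c - e = s -> s = 0 -> X = e / c.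
Proof. move=> c0 H s0; apply: (mulIf c0); rewrite divfK //; apply/eqP; rewrite -subr_eq0 H s0 //. Qed.

Lemma phiP A B C D (n1 n2 : F) : A - n1 != 0 -> B - n1 != 0 -> C - n2 != 0 -> D - n2 != 0 ->
  (A + n1) * (B + n1) * ((C - n2) * (D - n2)) = (C + n2) * (D + n2) * ((A - n1) * (B - n1))
  <-> phi A n1 * phi B n1 = phi C n2 * phi D n2.
Proof.
move=> hA hB hC hD; rewrite /phi !mulf_div; split => H.
  by apply/eqP; rewrite eqr_div ?mulf_neq0 //; apply/eqP.
by move/eqP: H; rewrite eqr_div ?mulf_neq0 // => /eqP.
Qed.

Lemma phi_neq0 A (n1 : F) : A + n1 != 0 -> A - n1 != 0 -> phi A n1 != 0.
Proof. by move=> h1 h2; rewrite /phi mulf_neq0 ?invr_eq0. Qed.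

Lemma combo (a1 a2 a3 a4 b1 b2 b3 b4 : F) : a2 != 0 -> a4 != 0 ->
  a1 * a2 = b1 * b2 -> a3 * a4 = b3 * b4 -> b4 * b2 = a4 * a2 -> b1 * b3 = a1 * a3.
Proof.
move=> h2 h4 R1 R2 E; apply: (mulIf (mulf_neq0 h2 h4)).
have ->: b1 * b3 * (a2 * a4) = (b1 * b2) * (b3 * b4).
  by rewrite [a2 * a4]mulrC -E; ring.
by rewrite -R1 -R2; ring.
Qed.

Lemma idA l m b p q X P Q :
  2 * ((m * (b-p) - l * (b-q)) * (m * (P-b) * (Q-X) - l * (Q-b) * (P-X) + l * m * (l-m))
     - (l * (Q-b) - m * (P-b)) * (m * (X-q) * (b-p) - l * (X-p) * (b-q) + l * m * (l-m)))
  = (l - m) * ((P-b+l) * (b-p+l) * ((Q-b-m) * (b-q-m)) - (Q-b+m) * (b-q+m) * ((P-b-l) * (b-p-l))).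
Proof. ring. Qed.

Lemma S12loc l m b p q X P Q : (2 : F) != 0 ->
  m * (b-p) - l * (b-q) <> 0 -> l * (Q-b) - m * (P-b) <> 0 ->
  (P-b+l) * (b-p+l) * ((Q-b-m) * (b-q-m)) = (Q-b+m) * (b-q+m) * ((P-b-l) * (b-p-l)) ->
  (m * (X-q) * (b-p) - l * (X-p) * (b-q) + l * m * (l-m) = 0 <->
   m * (P-b) * (Q-X) - l * (Q-b) * (P-X) + l * m * (l-m) = 0).
Proof.
move=> h2 /eqP c1 /eqP e1 E.
have H := idA l m b p q X P Q; rewrite E subrr mulr0 in H.
move/eqP: H; rewrite mulf_eq0 (negbTE h2) /= subr_eq0 => /eqP H.
split=> S.
  have : (m * (b-p) - l * (b-q)) * (m * (P-b) * (Q-X) - l * (Q-b) * (P-X) + l * m * (l-m)) = 0.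
    by rewrite H S mulr0.
  by move/eqP; rewrite mulf_eq0 (negbTE c1) /= => /eqP.
have : (l * (Q-b) - m * (P-b)) * (m * (X-q) * (b-p) - l * (X-p) * (b-q) + l * m * (l-m)) = 0.
  by rewrite -H S mulr0.
by move/eqP; rewrite mulf_eq0 (negbTE e1) /= => /eqP.
Qed.

Lemma solX1 l m b p q X : m * (b-p) - l * (b-q) != 0 ->
  m * (X-q) * (b-p) - l * (X-p) * (b-q) + l * m * (l-m) = 0 ->
  X = (m * q * (b-p) - l * p * (b-q) - l * m * (l-m)) / (m * (b-p) - l * (b-q)).
Proof. move=> c1 S; apply: (solve_lin c1 _ S); ring. Qed.

Lemma solX2 l m a p q (X0 : F) : l * (q-a) - m * (p-a) != 0 ->
  m * (p-a) * (q-X0) - l * (q-a) * (p-X0) + l * m * (l-m) = 0 ->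
  X0 = (l * (q-a) * p - m * (p-a) * q - l * m * (l-m)) / (l * (q-a) - m * (p-a)).
Proof. move=> c1 S; apply: (solve_lin c1 _ S); ring. Qed.

Lemma idE1 l m a b p q X (X0 : F) :
  m * (b-p) - l * (b-q) != 0 -> l * (q-a) - m * (p-a) != 0 ->
  m * (X-q) * (b-p) - l * (X-p) * (b-q) + l * m * (l-m) = 0 ->
  m * (p-a) * (q-X0) - l * (q-a) * (p-X0) + l * m * (l-m) = 0 ->
  (p-a+l) * (b-p+l) * ((X-p-m) * (p-X0-m)) = (X-p+m) * (p-X0+m) * ((p-a-l) * (b-p-l)).
Proof.
move=> c1 d1 S1 S2; rewrite (solX1 c1 S1) (solX2 d1 S2); field.
by rewrite c1 d1.
Qed.

Lemma idE2 l m a b p q X (X0 : F) :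
  m * (b-p) - l * (b-q) != 0 -> l * (q-a) - m * (p-a) != 0 ->
  m * (X-q) * (b-p) - l * (X-p) * (b-q) + l * m * (l-m) = 0 ->
  m * (p-a) * (q-X0) - l * (q-a) * (p-X0) + l * m * (l-m) = 0 ->
  (q-a+m) * (b-q+m) * ((X-q-l) * (q-X0-l)) = (X-q+l) * (q-X0+l) * ((q-a-m) * (b-q-m)).
Proof.
move=> c1 d1 S1 S2; rewrite (solX1 c1 S1) (solX2 d1 S2); field.
by rewrite c1 d1.
Qed.

Lemma idR1 l m b p q X :
  m * (b-p) - l * (b-q) != 0 ->
  m * (X-q) * (b-p) - l * (X-p) * (b-q) + l * m * (l-m) = 0 ->
  (X-p+m) * (b-q+m) * ((X-q-l) * (b-p-l)) = (X-q+l) * (b-p+l) * ((X-p-m) * (b-q-m)).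
Proof. move=> c1 S1; rewrite (solX1 c1 S1); field. by rewrite c1. Qed.

Lemma idR2 l m b P Q X :
  l * (Q-b) - m * (P-b) != 0 ->
  m * (P-b) * (Q-X) - l * (Q-b) * (P-X) + l * m * (l-m) = 0 ->
  (P-X+m) * (Q-b+m) * ((Q-X-l) * (P-b-l)) = (Q-X+l) * (P-b+l) * ((P-X-m) * (Q-b-m)).
Proof. move=> c1 S2; rewrite (solX2 c1 S2); field. by rewrite c1. Qed.

End Loc.

Lemma prvK N (k : 'I_N) : prv (nxt k) = k.
Proof. exact: ordSK. Qed.
Lemma nxtK N (k : 'I_N) : nxt (prv k) = k.
Proof. exact: ord_predK. Qed.

Local Open Scope complex_scope.

Theorem theorem13 (R : realType) (N : nat) (HN : (0 < N)%N)
  (lam mu : R[i]) (Hlam : lam <> 0) (Hmu : mu <> 0)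
  (x xt xh xht : 'I_N -> R[i])
  (Hgen : forall k, generic lam mu x xt xh xht k)
  (HS1 : forall k, S1_solvable lam mu x xt xh k)
  (HS2 : forall k, S2_solvable lam mu x xt xh k)
  (HE : forall k, btE lam mu x xt xh k) :
  ((forall k, btS1 lam mu x xt xh xht k) <-> (forall k, btS2 lam mu x xt xh xht k))
  /\
  (((forall k, btS1 lam mu x xt xh xht k) \/ (forall k, btS2 lam mu x xt xh xht k)) ->
   forall k, [/\ btE1 lam mu x xt xht k, btE2 lam mu x xh xht k
               & btE12 lam mu xt xh xht k]).
Proof.
have h2 : (2 : R[i]) != 0 by rewrite pnatr_eq0.
have Ek : forall k, 
   (xt (nxt k) - x (nxt k) + lam) * (x (nxt k) - xt k + lam) *
   ((xh (nxt k) - x (nxt k) - mu) * (x (nxt k) - xh k - mu)) =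
   (xh (nxt k) - x (nxt k) + mu) * (x (nxt k) - xh k + mu) *
   ((xt (nxt k) - x (nxt k) - lam) * (x (nxt k) - xt k - lam)).
  move=> k; have := HE (nxt k); rewrite /btE prvK.
  case: (Hgen (nxt k)) => [[[_ /eqP g1] _] [[_ /eqP h1] _]].
  case: (Hgen k) => [[_ [_ [[_ /eqP g3] _]]] [_ [_ [[_ /eqP h3] _]]]].
  by move=> E; apply/(phiP g1 g3 h1 h3).
have S12 : forall k, btS1 lam mu x xt xh xht k <-> btS2 lam mu x xt xh xht k.
  move=> k; exact: (S12loc _ h2 (HS1 k) (HS2 k) (Ek k)).
split.
  by split=> H k; apply/S12.
move=> H.
have [S1 S2] : (forall k, btS1 lam mu x xt xh xht k) /\ (forall k, btS2 lam mu x xt xh xht k).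
  by case: H => [H|H]; split=> k; try exact: H; apply/S12; exact: H.
move=> k.
case: (Hgen k) => [[[_ /eqP G1] [[_ /eqP G2] [[_ /eqP G3] [[_ /eqP G4] [[_ /eqP G5] [_ /eqP G6]]]]]]
                   [[_ /eqP H1] [[_ /eqP H2] [[/eqP H3p /eqP H3] [[_ /eqP H4] [[_ /eqP H5] [_ /eqP H6]]]]]]].
case: (Hgen (nxt k)) => [[[_ /eqP G1'] _] [[/eqP H1p' /eqP H1'] _]].
have c1 : mu * (x (nxt k) - xt k) - lam * (x (nxt k) - xh k) != 0 by apply/eqP; exact: HS1.
have d1 : lam * (xh k - x k) - mu * (xt k - x k) != 0.
  by apply/eqP; have := HS2 (prv k); rewrite /S2_solvable nxtK.
have e1 : lam * (xh (nxt k) - x (nxt k)) - mu * (xt (nxt k) - x (nxt k)) != 0.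
  by apply/eqP; exact: HS2.
have s1 := S1 k. have s2 := S2 k. have s2' := S2 (prv k).
rewrite /btS2 nxtK in s2'. rewrite /btS1 in s1. rewrite /btS2 in s2.
split.
- rewrite /btE1; apply/(phiP G1 G3 H4 H5).
  exact: (idE1 c1 d1 s1 s2').
- rewrite /btE2; apply/(phiP H1 H3 G4 G5).
  exact: (idE2 c1 d1 s1 s2').
- rewrite /btE12.
  have R1 : phi (xht k - xt k) mu * phi (x (nxt k) - xh k) mu
            = phi (xht k - xh k) lam * phi (x (nxt k) - xt k) lam.
    by apply/(phiP H4 H3 G4 G3); exact: (idR1 c1 s1).
  have R2 : phi (xt (nxt k) - xht k) mu * phi (xh (nxt k) - x (nxt k)) mu
            = phi (xh (nxt k) - xht k) lam * phi (xt (nxt k) - x (nxt k)) lam.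
    by apply/(phiP H6 H1' G6 G1'); exact: (idR2 e1 s2).
  have E := HE (nxt k); rewrite /btE prvK in E.
  exact: (combo (phi_neq0 H3p H3) (phi_neq0 H1p' H1') R1 R2 E).
Qed.
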